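(* If $G$ is a countably infinite HH-homogeneous graph satisfying property $(\dagger)$, then $G$ is HE-homogeneous.
   Context: All graphs are undirected and loopless; subgraphs are induced. A homomorphism maps adjacent vertices to adjacent vertices. $G$ is HH-homogeneous (resp. HE-homogeneous) if every homomorphism between finite induced subgraphs of $G$ is the restriction of an endomorphism (resp. a surjective endomorphism) of $G$. $G$ has property $(\dagger)$ if for every surjective homomorphism $f:A\to B$ between finite induced subgraphs $A,B$ of $G$ and every vertex $b\notin B$, there exists a vertex $a\notin A$ such that $f\cup\{(a,b)\}$ is a homomorphism from $A\cup\{a\}$ to $B\cup\{b\}$. *)

(* Defs.v *)
(* Finite (induced) subgraphs are given by finite vertex lists; a map between
   finite induced subgraphs is represented by a total function V -> V of which
   only the values on the domain matter. *)
From Stdlib Require Import List.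
Import ListNotations.

Section Graphs.
Context {V : Type} (E : V -> V -> Prop).

Definition simple_graph : Prop :=
  (forall x y, E x y -> E y x) /\ (forall x, ~ E x x).

Definition countably_infinite (T : Type) : Prop :=
  exists e : nat -> T, (forall m n, e m = e n -> m = n) /\ (forall x, exists n, e n = x).

Definition hom_between (A B : list V) (f : V -> V) : Prop :=
  (forall x, In x A -> In (f x) B) /\
  (forall x y, In x A -> In y A -> E x y -> E (f x) (f y)).

Definition onto_between (A B : list V) (f : V -> V) : Prop :=
  forall y, In y B -> exists x, In x A /\ f x = y.

Definition endomorphism (g : V -> V) : Prop :=
  forall x y, E x y -> E (g x) (g y).

Definition surjective_fun (g : V -> V) : Prop :=
  forall y, exists x, g x = y.

Definition HH_homogeneous : Prop :=
  forall (A B : list V) (f : V -> V), hom_between A B f ->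
    exists g, endomorphism g /\ forall x, In x A -> g x = f x.

Definition HE_homogeneous : Prop :=
  forall (A B : list V) (f : V -> V), hom_between A B f ->
    exists g, endomorphism g /\ surjective_fun g /\ forall x, In x A -> g x = f x.

(* Property (dagger): f ∪ {(a,b)} is a homomorphism from A ∪ {a} to B ∪ {b}.
   Since a ∉ A, f ∪ {(a,b)} is a well-defined map; we express it as a map h
   agreeing with f on A and sending a to b. *)
Definition dagger : Prop :=
  forall (A B : list V) (f : V -> V),
    hom_between A B f -> onto_between A B f ->
    forall b, ~ In b B ->
      exists a, ~ In a A /\
        (exists h : V -> V, h a = b /\ (forall x, In x A -> h x = f x) /\
          hom_between (a :: A) (b :: B) h).
End Graphs.

(* Main.v *)
Require Import Defs.
From Stdlib Require Import List Classical ClassicalEpsilon Lia.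
Import ListNotations.

Record St (V : Type) (E : V -> V -> Prop) := mkSt {
  SA : list V; SB : list V; Sf : V -> V;
  Sinv : hom_between E SA SB Sf /\ onto_between SA SB Sf }.
Arguments SA {V E}. Arguments SB {V E}. Arguments Sf {V E}. Arguments Sinv {V E}.

Definition StRel {V : Type} {E : V -> V -> Prop} (v : V) (s s' : St V E) : Prop :=
  incl (SA s) (SA s') /\ (forall x, In x (SA s) -> Sf s' x = Sf s x) /\
  In v (SA s') /\ In v (SB s').

Lemma step_ex (V : Type) (E : V -> V -> Prop) (HH : HH_homogeneous E) (D : dagger E)
  (v : V) (s : St V E) : exists s' : St V E, StRel v s s'.
Proof.
  destruct s as [A B f [[Hm He] Ho]]. simpl.
  destruct (HH A B f (conj Hm He)) as [g [Hg Hgf]].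
  assert (I1 : hom_between E (v :: A) (g v :: B) g /\ onto_between (v :: A) (g v :: B) g).
  { split; [split|].
    - intros x [<-|Hx]; [left; auto| right; rewrite Hgf; auto].
    - intros x y _ _ Hxy; apply Hg; auto.
    - intros y [<-|Hy]; [exists v; split; [left|]; auto|].
      destruct (Ho y Hy) as [x [Hx Hfx]]. exists x; split; [right; auto| rewrite Hgf; auto]. }
  destruct (classic (In v (g v :: B))) as [Hin|Hnin].
  - exists (mkSt V E (v :: A) (g v :: B) g I1). unfold StRel; simpl.
    split; [intros x Hx; right; auto|]. split; [auto|]. split; [left; auto| auto].
  - destruct I1 as [[Hm1 He1] Ho1].
    destruct (D (v :: A) (g v :: B) g (conj Hm1 He1) Ho1 v Hnin) as [a [_ [h [Ha [Hh Hhom]]]]].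
    assert (I2 : hom_between E (a :: v :: A) (v :: g v :: B) h /\
                 onto_between (a :: v :: A) (v :: g v :: B) h).
    { split; [exact Hhom|].
      intros y [<-|Hy]; [exists a; split; [left|]; auto|].
      destruct (Ho1 y Hy) as [x [Hx Hfx]]. exists x; split; [right; auto| rewrite Hh; auto]. }
    exists (mkSt V E (a :: v :: A) (v :: g v :: B) h I2). unfold StRel; simpl.
    split; [intros x Hx; right; right; auto|].
    split; [intros x Hx; rewrite Hh by (right; auto); auto|].
    split; [right; left; auto| left; auto].
Qed.

Theorem proposition4p4 (V : Type) (E : V -> V -> Prop) :
  simple_graph E -> countably_infinite V ->
  HH_homogeneous E -> dagger E -> HE_homogeneous E.
Proof.
  intros _ [e [_ He]] HH D A B f [Hm Hhe].
  assert (I0 : hom_between E A (map f A) f /\ onto_between A (map f A) f).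
  { split; [split|].
    - intros x Hx; apply in_map; auto.
    - exact Hhe.
    - intros y Hy; apply in_map_iff in Hy; destruct Hy as [x [? ?]]; eauto. }
  set (s0 := mkSt V E A (map f A) f I0).
  set (step := fun n s => proj1_sig (constructive_indefinite_description _ (step_ex V E HH D (e n) s))).
  assert (Hstep : forall n s, StRel (e n) s (step n s)).
  { intros n s; unfold step; exact (proj2_sig (constructive_indefinite_description _ _)). }
  set (seq := fix seq (n : nat) : St V E := match n with O => s0 | S k => step k (seq k) end).
  assert (Hmono : forall m n, m <= n -> incl (SA (seq m)) (SA (seq n)) /\
            forall x, In x (SA (seq m)) -> Sf (seq n) x = Sf (seq m) x).
  { intros m n Hle; induction Hle.
    - split; [intros x Hx; auto| auto].
    - destruct IHHle as [Hi Ha]. destruct (Hstep m0 (seq m0)) as [Hi' [Ha' _]].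
      simpl. split; [intros x Hx; apply Hi'; apply Hi; auto|].
      intros x Hx. rewrite Ha'; auto. }
  set (idx := fun x => proj1_sig (constructive_indefinite_description _ (He x))).
  assert (Hidx : forall x, e (idx x) = x).
  { intros x; unfold idx; exact (proj2_sig (constructive_indefinite_description (fun n => e n = x) (He x))). }
  assert (HinA : forall x, In x (SA (seq (S (idx x))))).
  { intros x. destruct (Hstep (idx x) (seq (idx x))) as [_ [_ [H _]]].
    rewrite Hidx in H. exact H. }
  set (g := fun x => Sf (seq (S (idx x))) x).
  assert (Hg : forall n x, In x (SA (seq n)) -> g x = Sf (seq n) x).
  { intros n x Hx. unfold g.
    destruct (Hmono n (max n (S (idx x))) ltac:(lia)) as [_ H1].
    destruct (Hmono (S (idx x)) (max n (S (idx x))) ltac:(lia)) as [_ H2].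
    rewrite <- H2 by apply HinA. rewrite H1 by exact Hx. reflexivity. }
  exists g. split; [|split].
  - intros x y Hxy.
    set (p := max (S (idx x)) (S (idx y))).
    destruct (Hmono (S (idx x)) p ltac:(lia)) as [Ix _].
    destruct (Hmono (S (idx y)) p ltac:(lia)) as [Iy _].
    assert (Hx : In x (SA (seq p))) by (apply Ix; apply HinA).
    assert (Hy : In y (SA (seq p))) by (apply Iy; apply HinA).
    rewrite (Hg p x Hx), (Hg p y Hy).
    destruct (Sinv (seq p)) as [[_ Hh] _]. apply Hh; auto.
  - intros y. destruct (Hstep (idx y) (seq (idx y))) as [_ [_ [_ H]]].
    rewrite Hidx in H. change (In y (SB (seq (S (idx y))))) in H.
    destruct (Sinv (seq (S (idx y)))) as [_ Ho].
    destruct (Ho y H) as [x [Hx Hfx]]. exists x. rewrite (Hg _ x Hx). exact Hfx.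
  - intros x Hx. exact (Hg 0 x Hx).
Qed.
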